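(* For all integers $n\geq 2$, \[g(n+1)<f(n)+\frac{1000}{\mu(n-1)^5}.\]
   Context: Let $\mu(m)=\pi\sqrt{m}$. For an integer $n\geq 2$ put $x=\mu(n-1)$, $y=\mu(n)$, $z=\mu(n+1)$, and define \[f(n)=e^{x-2y+z}\,\frac{y^{14}(x^5-x^4-1)(z^5-z^4-1)}{x^7z^7(y^5-y^4+1)^2},\qquad g(n)=e^{x-2y+z}\,\frac{y^{14}(x^5-x^4+1)(z^5-z^4+1)}{x^7z^7(y^5-y^4-1)^2}.\] Thus, with $w=\mu(n+2)$, $g(n+1)=e^{y-2z+w}\dfrac{z^{14}(y^5-y^4+1)(w^5-w^4+1)}{y^7w^7(z^5-z^4-1)^2}$. *)

(* Defs.v *)
From Stdlib Require Import Reals.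
Open Scope R_scope.

Definition mu (m : nat) : R := PI * sqrt (INR m).

Definition f_n (n : nat) : R :=
  let x := mu (n - 1) in let y := mu n in let z := mu (n + 1) in
  exp (x - 2 * y + z) *
  (y ^ 14 * (x ^ 5 - x ^ 4 - 1) * (z ^ 5 - z ^ 4 - 1)) /
  (x ^ 7 * z ^ 7 * (y ^ 5 - y ^ 4 + 1) ^ 2).

Definition g_n (n : nat) : R :=
  let x := mu (n - 1) in let y := mu n in let z := mu (n + 1) in
  exp (x - 2 * y + z) *
  (y ^ 14 * (x ^ 5 - x ^ 4 + 1) * (z ^ 5 - z ^ 4 + 1)) /
  (x ^ 7 * z ^ 7 * (y ^ 5 - y ^ 4 - 1) ^ 2).

(* Main.v *)
Require Import Defs.
From Stdlib Require Import Reals Lra Psatz Arith Factorial Lia.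
From Coquelicot Require Import Coquelicot.
Open Scope R_scope.

Lemma INR_fact_S n : INR (fact (S n)) = INR (S n) * INR (fact n).
Proof. rewrite fact_simpl, mult_INR. reflexivity. Qed.

Lemma PI_lo : 314/100 < PI.
Proof.
  destruct (Rlt_or_le (PI/2) (15701/10000)) as [H|H].
  2: lra.
  exfalso.
  assert (H1 := PI2_3_2).
  destruct (cos_bound (PI/2) 2) as [Hl _]; try lra.
  rewrite cos_PI2 in Hl.
  unfold cos_approx, cos_term in Hl. cbn [sum_f_R0 Nat.mul Nat.add] in Hl.
  rewrite !INR_fact_S in Hl. cbn [fact] in Hl. rewrite !S_INR in Hl. simpl INR in Hl.
  cbn [pow] in Hl.
  set (t := PI/2) in *.
  match type of Hl with ?a <= 0 =>
    assert (E : a = 1 - t^2/2 + t^4/24 - t^6/720 + t^8/40320 - t^10/3628800) by (field) end.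
  rewrite E in Hl. clear E.
  assert (t2 : 2.25 < t^2) by nra.
  assert (t2' : t^2 < 15701/10000*(15701/10000)) by nra.
  set (s := t^2) in *.
  replace (t^4) with (s^2) in Hl by (unfold s; ring).
  replace (t^6) with (s^3) in Hl by (unfold s; ring).
  replace (t^8) with (s^4) in Hl by (unfold s; ring).
  replace (t^10) with (s^5) in Hl by (unfold s; ring).
  clearbody s.
  set (m := 15701/10000*(15701/10000)) in *.
  assert (A : 1 - m/2 + m^2/24 <= 1 - s/2 + s^2/24) by (unfold m in *; nra).
  assert (B : s^3 <= m^3) by (apply pow_incr; lra).
  assert (C : 2.25^4 <= s^4) by (apply pow_incr; lra).
  assert (D : s^5 <= m^5) by (apply pow_incr; lra).
  unfold m in *. lra.
Qed.

Lemma PI_hi : PI < 315/100.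
Proof.
  destruct (Rlt_or_le (PI/2) (1575/1000)) as [H|H].
  lra.
  exfalso.
  assert (H1 := PI2_3_2).
  destruct (cos_bound (1575/1000) 2) as [_ Hl]; try lra.
  assert (Hc := cos_ge_0 (1575/1000) ltac:(lra) H).
  unfold cos_approx, cos_term in Hl. cbn [sum_f_R0 Nat.mul Nat.add] in Hl.
  rewrite !INR_fact_S in Hl. cbn [fact] in Hl. rewrite !S_INR in Hl. simpl INR in Hl.
  cbn [pow] in Hl. lra.
Qed.

Definition Phi (m : R) : R := PI * sqrt m + ln (PI * sqrt m - 1) - 3 * ln (sqrt m).
Definition Phi1 (m : R) : R := PI^2 / (2 * (PI * sqrt m - 1)) - 3 / (2 * m).
Definition Phi2 (m : R) : R := - PI^3 / (4 * sqrt m * (PI * sqrt m - 1)^2) + 3 / (2 * m^2).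
Definition Phi3 (m : R) : R :=
  PI^3 * (3 * PI * sqrt m - 1) / (8 * sqrt m ^ 3 * (PI * sqrt m - 1)^3) - 3 / m^3.

Lemma PI_gt3 : 3 < PI. Proof. assert (H := PI_lo). lra. Qed.

Ltac nz := match goal with |- ?a <> 0 => assert (0 < a) by (repeat apply Rmult_lt_0_compat; lra); lra end.

Lemma basics m : 1 <= m -> 1 <= sqrt m /\ sqrt m * sqrt m = m /\ 0 < PI * sqrt m - 1.
Proof.
  intros H. assert (H1 : 1 <= sqrt m) by (rewrite <- sqrt_1; apply sqrt_le_1_alt; lra).
  split; [lra|split]. apply sqrt_sqrt; lra. assert (H2 := PI_gt3). nra.
Qed.

Lemma d1 m : 1 <= m -> is_derive Phi m (Phi1 m).
Proof.
  intros H. destruct (basics m H) as [Hs [Hss Hp]].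
  unfold Phi, Phi1. auto_derive.
  - repeat split; lra.
  - set (s := sqrt m) in *. clearbody s. subst m. field. lra.
Qed.

Lemma d2 m : 1 <= m -> is_derive Phi1 m (Phi2 m).
Proof.
  intros H. destruct (basics m H) as [Hs [Hss Hp]].
  unfold Phi1, Phi2. auto_derive.
  - repeat split; try lra; nz.
  - set (s := sqrt m) in *. clearbody s. subst m. field. split; lra.
Qed.

Lemma d3 m : 1 <= m -> is_derive Phi2 m (Phi3 m).
Proof.
  intros H. destruct (basics m H) as [Hs [Hss Hp]].
  unfold Phi2, Phi3. auto_derive.
  - repeat split; try lra; nz.
  - set (s := sqrt m) in *. clearbody s. subst m. field. split; lra.
Qed.

Lemma div_nonpos a b : a <= 0 -> 0 < b -> a / b <= 0.
Proof. intros. unfold Rdiv. assert (0 < / b) by (apply Rinv_0_lt_compat; lra). nra. Qed.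

Ltac fside := repeat split; apply Rgt_not_eq; lra.

Lemma Phi2_neg m : 1 <= m -> Phi2 m <= 0.
Proof.
  intros H. destruct (basics m H) as [Hs [Hss Hp]]. assert (H3 := PI_gt3).
  unfold Phi2. set (s := sqrt m) in *. clearbody s. subst m.
  set (p := PI * s) in *.
  assert (Hp3 : 3 <= p) by (unfold p; nra).
  assert (E: - PI ^ 3 / (4 * s * (p - 1) ^ 2) + 3 / (2 * (s * s) ^ 2) = (6*(p-1)^2 - p^3) / (4*s^4*(p-1)^2))
    by (unfold p in *; field; fside).
  rewrite E.
  apply div_nonpos. { assert (0 <= (p-2)^3) by (apply pow_le; lra). nra. }
  assert (0 < s^4) by (apply pow_lt; lra). assert (0 < (p-1)^2) by nra. nra.
Qed.

Lemma Phi3_bound m : 1 <= m -> Phi3 m <= 3 * PI / (8 * sqrt m ^ 5).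
Proof.
  intros H. destruct (basics m H) as [Hs [Hss Hp]]. assert (H3 := PI_gt3).
  unfold Phi3. set (s := sqrt m) in *. clearbody s. subst m.
  set (p := PI * s) in *.
  assert (Hp3 : 3 <= p) by (unfold p; nra).
  assert (E : 3 * PI / (8 * s ^ 5) - (PI ^ 3 * (3 * PI * s - 1) / (8 * s ^ 3 * (p - 1) ^ 3) - 3 / (s * s) ^ 3)
    = (16*p^3 - 63*p^2 + 69*p - 24) / (8*s^6*(p-1)^3)) by (unfold p in *; field; fside).
  assert (0 <= (16*p^3 - 63*p^2 + 69*p - 24) / (8*s^6*(p-1)^3)).
  { apply Rdiv_le_0_compat. { assert (0 <= (p-3)^3) by (apply pow_le; lra). assert (0 <= (p-3)^2) by (apply pow_le; lra). nra. }
    assert (0 < s^6) by (apply pow_lt; lra). assert (0 < (p-1)^3) by (apply pow_lt; lra). nra. }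
  lra.
Qed.

Lemma mvt (h h' : R -> R) a b : a < b ->
  (forall c, a <= c <= b -> is_derive h c (h' c)) ->
  exists c, a < c < b /\ h b - h a = h' c * (b - a).
Proof.
  intros Hab Hd.
  destruct (MVT_cor2 h h' a b Hab) as [c [E Hc]].
  { intros c Hc. apply is_derive_Reals. apply Hd; exact Hc. }
  exists c. split; assumption.
Qed.

Lemma nonincr (h h' : R -> R) a b :
  (forall c, a <= c <= b -> is_derive h c (h' c)) ->
  (forall c, a <= c <= b -> h' c <= 0) ->
  forall x y, a <= x -> x <= y -> y <= b -> h y <= h x.
Proof.
  intros Hd Hn x y Hx Hxy Hy.
  destruct (Rle_lt_or_eq_dec x y Hxy) as [Hlt|Heq].
  - destruct (mvt h h' x y Hlt) as [c [Hc E]].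
    { intros c Hc. apply Hd. lra. }
    assert (h' c <= 0) by (apply Hn; lra). nra.
  - subst. lra.
Qed.

Lemma conc (h h1 h2 : R -> R) a :
  (forall c, a <= c <= a + 2 -> is_derive h c (h1 c)) ->
  (forall c, a <= c <= a + 2 -> is_derive h1 c (h2 c)) ->
  (forall c, a <= c <= a + 2 -> h2 c <= 0) ->
  h (a + 2) - 2 * h (a + 1) + h a <= 0.
Proof.
  intros D1 D2 N.
  destruct (mvt h h1 a (a+1)) as [c1 [Hc1 E1]]. lra. { intros c Hc. apply D1. lra. }
  destruct (mvt h h1 (a+1) (a+2)) as [c2 [Hc2 E2]]. lra. { intros c Hc. apply D1. lra. }
  assert (h1 c2 <= h1 c1) by (apply (nonincr h1 h2 a (a+2)); try assumption; lra).
  replace (a + 1 - a) with 1 in E1 by ring.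
  replace (a + 2 - (a + 1)) with 1 in E2 by ring.
  lra.
Qed.

Lemma shift_der (h h' : R -> R) t : is_derive h (t + 1) (h' (t + 1)) ->
  is_derive (fun u => h (u + 1)) t (h' (t + 1)).
Proof.
  intros H.
  assert (H2 : is_derive (fun u : R => u + 1) t 1) by (auto_derive; auto; ring).
  generalize (is_derive_comp h (fun u => u + 1) t _ _ H H2).
  intros H3. change (scal 1 (h' (t+1))) with (1 * h' (t+1)) in H3. rewrite Rmult_1_l in H3. exact H3.
Qed.

Lemma third (h h1 h2 h3 : R -> R) a K :
  (forall c, a <= c <= a + 3 -> is_derive h c (h1 c)) ->
  (forall c, a <= c <= a + 3 -> is_derive h1 c (h2 c)) ->
  (forall c, a <= c <= a + 3 -> is_derive h2 c (h3 c)) ->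
  (forall c, a <= c <= a + 3 -> h3 c <= K) ->
  h (a + 3) - 3 * h (a + 2) + 3 * h (a + 1) - h a <= K.
Proof.
  intros D1 D2 D3 B.
  set (H := fun t => h (t + 1) - h t - K * ((t+1)^3 - t^3) / 6).
  set (H1 := fun t => h1 (t + 1) - h1 t - K * ((t+1)^2 - t^2) / 2).
  set (H2 := fun t => h2 (t + 1) - h2 t - K).
  assert (C := conc H H1 H2 a).
  assert (Hc : H (a + 2) - 2 * H (a + 1) + H a <= 0).
  { apply C.
    - intros c Hc. unfold H, H1.
      apply (is_derive_minus (fun t => h (t+1) - h t) (fun t => K * ((t+1)^3 - t^3) / 6)).
      apply (is_derive_minus (fun t => h (t+1)) h).
      apply shift_der. apply D1; lra. apply D1; lra.
      auto_derive; auto. field.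
    - intros c Hc. unfold H1, H2.
      apply (is_derive_minus (fun t => h1 (t+1) - h1 t) (fun t => K * ((t+1)^2 - t^2) / 2)).
      apply (is_derive_minus (fun t => h1 (t+1)) h1).
      apply shift_der. apply D2; lra. apply D2; lra.
      auto_derive; auto. field.
    - intros c Hc. unfold H2.
      destruct (mvt h2 h3 c (c+1)) as [d [Hd E]]. lra. { intros x Hx. apply D3. lra. }
      assert (h3 d <= K) by (apply B; lra).
      replace (c + 1 - c) with 1 in E by ring. lra. }
  unfold H in Hc.
  replace (a + 2 + 1) with (a + 3) in Hc by ring.
  replace (a + 1 + 1) with (a + 2) in Hc by ring.
  assert (E : ((a + 2 + 1) ^ 3 - (a + 2) ^ 3) - 2 * ((a + 1 + 1) ^ 3 - (a + 1) ^ 3) + ((a + 1) ^ 3 - a ^ 3) = 6) by ring.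
  nra.
Qed.
Lemma exp_chord K M : 0 <= K -> K <= M -> 0 < M -> exp K <= 1 + K * (exp M - 1) / M.
Proof.
  intros H0 H1 HM.
  assert (Dexp : forall c, is_derive exp c (exp c)) by (intros c; auto_derive; auto; ring).
  destruct (Rle_lt_or_eq_dec 0 K H0) as [HK0|HK0]; [|subst; rewrite exp_0; lra].
  destruct (Rle_lt_or_eq_dec K M H1) as [HKM|HKM]; [|subst; field_simplify; lra].
  destruct (mvt exp exp 0 K HK0) as [c1 [Hc1 E1]]. { intros; apply Dexp. }
  destruct (mvt exp exp K M HKM) as [c2 [Hc2 E2]]. { intros; apply Dexp. }
  rewrite exp_0 in E1.
  assert (exp c1 <= exp c2) by (apply exp_le_3 || (left; apply exp_increasing; lra)).
  assert (HKK : 0 <= K * (M - K)) by nra.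
  assert (0 <= K * (M - K) * (exp c2 - exp c1)) by nra.
  apply (Rmult_le_reg_r M); [lra|].
  replace ((1 + K * (exp M - 1) / M) * M) with (M + K * (exp M - 1)) by (field; lra).
  nra.
Qed.

Lemma exp_sq a : exp (2 * a) = exp a ^ 2.
Proof. replace (2 * a) with (a + a) by ring. rewrite exp_plus. ring. Qed.

Lemma exp_119 : exp (119/100) <= 345/100.
Proof.
  set (t := 119/1600).
  assert (H1 : 1 + - t <= exp (- t)) by apply exp_ineq1_le.
  rewrite exp_Ropp in H1.
  assert (Hq : 0 < exp t) by apply exp_pos.
  assert (Hq1 : exp t <= 10804/10000).
  { assert (H2 : (1 - t) * exp t <= 1).
    { apply (Rmult_le_compat_r (exp t)) in H1; [|lra].
      rewrite Rinv_l in H1 by lra. lra. }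
    unfold t in *. lra. }
  replace (119/100) with (2 * (2 * (2 * (2 * t)))) by (unfold t; field).
  rewrite !exp_sq.
  assert (exp t ^ 2 <= (10804/10000)^2) by (apply pow_incr; lra).
  assert ((exp t ^ 2)^2 <= ((10804/10000)^2)^2) by (apply pow_incr; split; [apply pow_le; lra|lra]).
  assert (((exp t ^ 2)^2)^2 <= (((10804/10000)^2)^2)^2) by (apply pow_incr; split; [apply pow_le; apply pow_le; lra|lra]).
  assert ((((exp t ^ 2)^2)^2)^2 <= ((((10804/10000)^2)^2)^2)^2) by (apply pow_incr; split; [apply pow_le; apply pow_le; apply pow_le; lra|lra]).
  lra.
Qed.

Lemma exp_bnd K : 0 <= K -> K <= 119/100 -> exp K <= 1 + K * (245/119).
Proof.
  intros H0 H1. assert (H := exp_chord K (119/100) H0 H1 ltac:(lra)).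
  assert (H2 := exp_119).
  assert (K * (exp (119/100) - 1) / (119/100) <= K * (245/119)).
  { unfold Rdiv. rewrite Rmult_assoc. apply Rmult_le_compat_l; [lra|]. lra. }
  lra.
Qed.

Definition ev (P e s : R) := e * (P * s - 1) / s ^ 3.

Ltac fside2 := repeat split; apply Rgt_not_eq; nra.

Lemma div_le a b c : 0 < c -> a <= b * c -> a / c <= b.
Proof.
  intros Hc H. unfold Rdiv. apply (Rmult_le_reg_r c); [lra|].
  rewrite Rmult_assoc, Rinv_l by lra. lra.
Qed.

Lemma le_div a b c : 0 < c -> b * c <= a -> b <= a / c.
Proof.
  intros Hc H. unfold Rdiv. apply (Rmult_le_reg_r c); [lra|].
  rewrite Rmult_assoc, Rinv_l by lra. lra.
Qed.

Lemma final (P s0 s1 s2 s3 e0 e1 e2 e3 E : R) :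
  314/100 < P -> P < 315/100 -> 1 <= s0 -> s0 <= s1 -> s1 <= s2 -> s2 <= s3 ->
  0 < e0 -> 0 < e1 -> 0 < e2 -> 0 < e3 ->
  ev P e0 s0 * ev P e2 s2 <= ev P e1 s1 ^ 2 ->
  ev P e1 s1 ^ 3 * ev P e3 s3 <= E * ev P e0 s0 * ev P e2 s2 ^ 3 ->
  E <= 1 + (3 * P / (8 * s0 ^ 5)) * (245/119) ->
  let x := P * s0 in let y := P * s1 in let z := P * s2 in let w := P * s3 in
  e1 * e3 / e2 ^ 2 * (z ^ 14 * (y ^ 5 - y ^ 4 + 1) * (w ^ 5 - w ^ 4 + 1)) /
    (y ^ 7 * w ^ 7 * (z ^ 5 - z ^ 4 - 1) ^ 2) <
  e0 * e2 / e1 ^ 2 * (y ^ 14 * (x ^ 5 - x ^ 4 - 1) * (z ^ 5 - z ^ 4 - 1)) /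
    (x ^ 7 * z ^ 7 * (y ^ 5 - y ^ 4 + 1) ^ 2) + 1000 / x ^ 5.
Proof.
  intros HP1 HP2 H0 H01 H12 H23 He0 He1 He2 He3 H4 H5 HE x y z w.
  assert (Hx : 314/100 <= x) by (unfold x; nra).
  assert (Hxy : x <= y) by (unfold x, y; nra).
  assert (Hyz : y <= z) by (unfold y, z; nra).
  assert (Hzw : z <= w) by (unfold z, w; nra).
  set (q := fun t => t^4 * (t - 1)).
  assert (qmono : forall a b, 314/100 <= a -> a <= b -> q a <= q b).
  { intros a b Ha Hab. unfold q. assert (a^4 <= b^4) by (apply pow_incr; lra).
    assert (0 <= a^4) by (apply pow_le; lra). nra. }
  assert (qpos : forall a, 314/100 <= a -> 2 <= q a).
  { intros a Ha. unfold q. assert (1 <= a^4) by (apply pow_R1_Rle; lra). nra. }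
  set (eps := fun t => / q t).
  assert (Hs0 : 0 < s0) by lra. assert (Hs1 : 0 < s1) by lra. assert (Hs2 : 0 < s2) by lra. assert (Hs3 : 0 < s3) by lra.
  assert (qx := qpos x Hx). assert (qy := qpos y ltac:(lra)). assert (qz := qpos z ltac:(lra)). assert (qw := qpos w ltac:(lra)).
  assert (Ef : e0 * e2 / e1 ^ 2 * (y ^ 14 * (x ^ 5 - x ^ 4 - 1) * (z ^ 5 - z ^ 4 - 1)) /
    (x ^ 7 * z ^ 7 * (y ^ 5 - y ^ 4 + 1) ^ 2) =
    (ev P e0 s0 * ev P e2 s2 / ev P e1 s1 ^ 2) * ((1 - / q x) * (1 - / q z) / (1 + / q y)^2)).
  { unfold ev, q in *. unfold x, y, z in *. field. repeat split; apply Rgt_not_eq; nra. }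
  assert (Eg : e1 * e3 / e2 ^ 2 * (z ^ 14 * (y ^ 5 - y ^ 4 + 1) * (w ^ 5 - w ^ 4 + 1)) /
    (y ^ 7 * w ^ 7 * (z ^ 5 - z ^ 4 - 1) ^ 2) =
    (ev P e1 s1 * ev P e3 s3 / ev P e2 s2 ^ 2) * ((1 + / q y) * (1 + / q w) / (1 - / q z)^2)).
  { unfold ev, q in *. unfold w, y, z in *. field. repeat split; apply Rgt_not_eq; nra. }
  rewrite Ef, Eg. clear Ef Eg.
  assert (ev_pos : forall e s, 0 < e -> 1 <= s -> 0 < ev P e s).
  { intros e s He Hs. unfold ev. apply Rdiv_lt_0_compat. apply Rmult_lt_0_compat. lra. nra.
    apply pow_lt; lra. }
  assert (p0 := ev_pos e0 s0 He0 ltac:(lra)). assert (p1 := ev_pos e1 s1 He1 ltac:(lra)).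
  assert (p2 := ev_pos e2 s2 He2 ltac:(lra)). assert (p3 := ev_pos e3 s3 He3 ltac:(lra)).
  set (a0 := ev P e0 s0) in *. set (a1 := ev P e1 s1) in *.
  set (a2 := ev P e2 s2) in *. set (a3 := ev P e3 s3) in *.
  assert (HA1 : a0 * a2 / a1 ^ 2 <= 1).
  { apply div_le. apply pow_lt; lra. lra. }
  assert (HA0 : 0 < a0 * a2 / a1 ^ 2) by (apply Rdiv_lt_0_compat; [nra|apply pow_lt; lra]).
  assert (HB0 : 0 < a1 * a3 / a2 ^ 2) by (apply Rdiv_lt_0_compat; [nra|apply pow_lt; lra]).
  assert (HE0 : 0 <= E).
  { destruct (Rle_or_lt 0 E) as [h|h]; auto. exfalso.
    assert (0 < a0 * a2 ^ 3) by (apply Rmult_lt_0_compat; [lra|apply pow_lt; lra]).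
    assert (0 < a1 ^ 3 * a3) by (apply Rmult_lt_0_compat; [apply pow_lt; lra|lra]). nra. }
  assert (HBA : a1 * a3 / a2 ^ 2 <= E * (a0 * a2 / a1 ^ 2)).
  { apply div_le. apply pow_lt; lra.
    replace (E * (a0 * a2 / a1 ^ 2) * a2 ^ 2) with ((E * a0 * a2 ^ 3) / a1^2) by (field; fside2).
    apply (Rmult_le_reg_r (a1^2)). apply pow_lt; lra.
    replace (E * a0 * a2 ^ 3 / a1 ^ 2 * a1 ^ 2) with (E * a0 * a2 ^ 3) by (field; fside2).
    nra. }
  assert (Hx5 : 305 <= x ^ 5).
  { assert ((314/100)^5 <= x^5) by (apply pow_incr; lra). lra. }
  set (u := / x ^ 5).
  assert (Hu0 : 0 < u) by (unfold u; apply Rinv_0_lt_compat; lra).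
  assert (Hu1 : u <= 1/305).
  { unfold u. unfold Rdiv. rewrite Rmult_1_l. apply Rinv_le_contravar; lra. }
  assert (HK : E <= 1 + 757 * u).
  { assert (EK : 3 * P / (8 * s0 ^ 5) = 3 * P^6 / 8 * u) by (unfold u, x; field; fside2).
    rewrite EK in HE.
    assert (P^6 <= (315/100)^6) by (apply pow_incr; lra). nra. }
  set (e := / q x).
  assert (He : e <= 1468/1000 * u).
  { unfold e, u, q.
    replace (/ (x ^ 4 * (x - 1))) with (x / (x - 1) * / x ^ 5) by (field; fside2).
    apply Rmult_le_compat_r. left; apply Rinv_0_lt_compat; lra. apply div_le; lra. }
  assert (epos : 0 < e) by (unfold e; apply Rinv_0_lt_compat; lra).
  assert (emono : forall t, x <= t -> 0 < / q t <= e).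
  { intros t Ht. assert (Q1 := qmono x t Hx Ht). assert (Q2 := qpos t ltac:(lra)). split.
    apply Rinv_0_lt_compat; lra. unfold e. apply Rinv_le_contravar; lra. }
  destruct (emono y Hxy) as [ey0 ey1]. destruct (emono z ltac:(lra)) as [ez0 ez1].
  destruct (emono w ltac:(lra)) as [ew0 ew1].
  set (ey := / q y) in *. set (ez := / q z) in *. set (ew := / q w) in *.
  assert (HG : (1 + ey) * (1 + ew) / (1 - ez) ^ 2 <= 1 + 7 * u).
  { apply div_le. nra.
    assert ((1 + ey) * (1 + ew) <= (1 + e)^2) by nra.
    assert ((1 - e)^2 <= (1 - ez)^2) by nra.
    assert ((1 + e)^2 <= (1 + 7*u) * (1 - e)^2) by nra.
    nra. }
  assert (HF : 1 - 7 * u <= (1 - e) * (1 - ez) / (1 + ey) ^ 2).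
  { apply le_div. nra.
    assert ((1 - e)^2 <= (1 - e) * (1 - ez)) by nra.
    assert ((1 + ey)^2 <= (1 + e)^2) by nra.
    assert ((1 - 7 * u) * (1 + e)^2 <= (1 - e)^2) by nra.
    nra. }
  fold e.
  set (A := a0 * a2 / a1 ^ 2) in *. set (B := a1 * a3 / a2 ^ 2) in *.
  set (G := (1 + ey) * (1 + ew) / (1 - ez) ^ 2) in *.
  set (F := (1 - e) * (1 - ez) / (1 + ey) ^ 2) in *.
  assert (G0 : 0 < G) by (unfold G; apply Rdiv_lt_0_compat; nra).
  replace (1000 / x ^ 5) with (1000 * u) by (unfold u; field; fside2).
  assert (B * G <= E * A * (1 + 7 * u)) by nra.
  assert (E * A <= (1 + 757 * u) * A) by nra.
  nra.
Qed.

Lemma exp_le a b : a <= b -> exp a <= exp b.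
Proof. intros H. destruct (Rle_lt_or_eq_dec a b H) as [h|h]. left; apply exp_increasing; exact h. subst; lra. Qed.

Lemma exp3 a b c : exp (a - 2 * b + c) = exp a * exp c / exp b ^ 2.
Proof.
  replace (a - 2 * b + c) with (a + c + - (b + b)) by ring.
  rewrite !exp_plus, exp_Ropp, exp_plus. field. apply Rgt_not_eq, exp_pos.
Qed.

Lemma exp_Phi m : 1 <= m -> exp (Phi m) = ev PI (exp (PI * sqrt m)) (sqrt m).
Proof.
  intros H. destruct (basics m H) as [Hs [Hss Hp]]. unfold Phi, ev.
  set (s := sqrt m) in *. clearbody s.
  replace (PI * s + ln (PI * s - 1) - 3 * ln s) with (PI * s + ln (PI * s - 1) + - (ln s + ln s + ln s)) by ring.
  rewrite !exp_plus, exp_Ropp, !exp_plus, !exp_ln by lra. field. lra.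
Qed.

Theorem theorem3p2 : forall n : nat, (2 <= n)%nat ->
  g_n (n + 1) < f_n n + 1000 / (mu (n - 1)) ^ 5.
Proof.
  intros n Hn.
  assert (HnR : 2 <= INR n) by (apply le_INR in Hn; simpl in Hn; lra).
  assert (Ha : INR (n - 1) = INR n - 1) by (rewrite minus_INR by lia; simpl; ring).
  assert (Hc : INR (n + 1) = INR n - 1 + 2) by (rewrite plus_INR; simpl; ring).
  assert (Hd : INR (n + 1 + 1) = INR n - 1 + 3) by (rewrite !plus_INR; simpl; ring).
  assert (Hb : INR n = INR n - 1 + 1) by ring.
  unfold g_n, f_n, mu. cbv zeta.
  replace (n + 1 - 1)%nat with n by lia.
  rewrite Hd, Hc, Ha.
  remember (INR n - 1) as m0 eqn:Hm0.
  rewrite Hb.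
  assert (Hm : 1 <= m0) by lra.
  clear Ha Hb Hc Hd Hm0 HnR.
  rewrite !exp3.
  assert (Hs0 : 1 <= sqrt m0) by (destruct (basics m0 Hm); lra).
  assert (mono : forall a b, 0 <= a -> a <= b -> sqrt a <= sqrt b) by (intros; apply sqrt_le_1_alt; lra).
  set (K := 3 * PI / (8 * sqrt m0 ^ 5)).
  assert (HK0 : 0 <= K).
  { unfold K. apply Rdiv_le_0_compat. assert (HPI3 := PI_gt3). lra. apply Rmult_lt_0_compat. lra. apply pow_lt; lra. }
  assert (HK1 : K <= 119/100).
  { unfold K. apply div_le. apply Rmult_lt_0_compat. lra. apply pow_lt; lra.
    assert (1 <= sqrt m0 ^ 5) by (apply pow_R1_Rle; lra). assert (HPIh := PI_hi). nra. }
  assert (Hconc : Phi (m0 + 2) - 2 * Phi (m0 + 1) + Phi m0 <= 0).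
  { apply (conc Phi Phi1 Phi2).
    - intros c Hc. apply d1; lra.
    - intros c Hc. apply d2; lra.
    - intros c Hc. apply Phi2_neg; lra. }
  assert (Hthird : Phi (m0 + 3) - 3 * Phi (m0 + 2) + 3 * Phi (m0 + 1) - Phi m0 <= K).
  { apply (third Phi Phi1 Phi2 Phi3).
    - intros c Hc. apply d1; lra.
    - intros c Hc. apply d2; lra.
    - intros c Hc. apply d3; lra.
    - intros c Hc. eapply Rle_trans. apply Phi3_bound; lra.
      unfold K. unfold Rdiv. apply Rmult_le_compat_l. assert (HPI3 := PI_gt3). lra.
      apply Rinv_le_contravar. apply Rmult_lt_0_compat. lra. apply pow_lt; lra.
      apply Rmult_le_compat_l. lra. apply pow_incr. split. lra. apply mono; lra. }
  assert (E0 := exp_Phi m0 Hm). assert (E1 := exp_Phi (m0+1) ltac:(lra)).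
  assert (E2 := exp_Phi (m0+2) ltac:(lra)). assert (E3 := exp_Phi (m0+3) ltac:(lra)).
  refine (final PI (sqrt m0) (sqrt (m0+1)) (sqrt (m0+2)) (sqrt (m0+3))
     (exp (PI * sqrt m0)) (exp (PI * sqrt (m0+1))) (exp (PI * sqrt (m0+2))) (exp (PI * sqrt (m0+3)))
     (exp K) PI_lo PI_hi Hs0 _ _ _ (exp_pos _) (exp_pos _) (exp_pos _) (exp_pos _) _ _ (exp_bnd K HK0 HK1)).
  - apply mono; lra.
  - apply mono; lra.
  - apply mono; lra.
  - rewrite <- E0, <- E1, <- E2, <- exp_plus.
    replace (exp (Phi (m0 + 1)) ^ 2) with (exp (Phi (m0 + 1) + Phi (m0 + 1))) by (rewrite exp_plus; ring).
    apply exp_le. lra.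
  - rewrite <- E0, <- E1, <- E2, <- E3.
    replace (exp (Phi (m0 + 1)) ^ 3 * exp (Phi (m0 + 3))) with (exp (Phi (m0 + 1) + Phi (m0 + 1) + Phi (m0 + 1) + Phi (m0 + 3))) by (rewrite !exp_plus; ring).
    replace (exp K * exp (Phi m0) * exp (Phi (m0 + 2)) ^ 3) with (exp (K + Phi m0 + Phi (m0 + 2) + Phi (m0 + 2) + Phi (m0 + 2))) by (rewrite !exp_plus; ring).
    apply exp_le. lra.
Qed.
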